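(* Let $G=(V,E)$ be a connected simple graph on $n$ vertices equipped with the minimum degree conductance function $c(u,v)=\frac{1}{\min[d(u),d(v)]}$, and for every $e\in E$ let $R(e)$ denote the effective resistance between the endpoints of $e$ in the electrical network in which each edge $e$ is a resistor of resistance $1/c(e)$. Then for every set $T\subseteq E$ of edges forming a spanning tree of $G$, $CYC[G,c]\le 2(n-1)\sum_{e\in T}R(e)$.
   Context: $d(v)$ is the degree of $v$. The effective resistance $R(u,v)$ is the voltage at $u$ when a current of 1 unit is injected at $u$ and $v$ is grounded. The random walk associated with $c$ moves from $v$ to a neighbor $u$ with probability $\frac{c(v,u)}{\sum_{w\in N(v)}c(v,w)}$; $H[u,v]$ is the expected number of steps from $u$ to reach $v$; the cyclic cover time is $CYC[G,c]=\min_{\sigma}\left(\sum_{i=1}^{n-1}H[v_{\sigma(i)},v_{\sigma(i+1)}]+H[v_{\sigma(n)},v_{\sigma(1)}]\right)$, minimum over orderings $\sigma$ of the vertices. *)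

(* Defs.v *)
From Stdlib Require Import Reals Lra List Relations Permutation.
Open Scope R_scope.

(* Graphs: vertex set {0,...,n-1}; edges given by a boolean relation adj. *)

Fixpoint fsum (m : nat) (f : nat -> R) : R :=
  match m with
  | O => 0
  | S k => fsum k f + f k
  end.

Definition simple_graph (n : nat) (adj : nat -> nat -> bool) : Prop :=
  (forall x y, adj x y = adj y x) /\
  (forall x, adj x x = false) /\
  (forall x y, adj x y = true -> (x < n)%nat /\ (y < n)%nat).

Definition connected (n : nat) (adj : nat -> nat -> bool) : Prop :=
  forall u v, (u < n)%nat -> (v < n)%nat ->
    clos_refl_trans nat (fun x y => adj x y = true) u v.

Definition deg (n : nat) (adj : nat -> nat -> bool) (v : nat) : nat :=
  length (filter (adj v) (seq 0 n)).

Definition cond (n : nat) (adj : nat -> nat -> bool) (u v : nat) : R :=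
  if adj u v then 1 / INR (Nat.min (deg n adj u) (deg n adj v)) else 0.

Definition trans (n : nat) (adj : nat -> nat -> bool) (x y : nat) : R :=
  cond n adj x y / fsum n (fun w => cond n adj x w).

(* k-step transition probabilities of the walk killed at v:
   Qpow k x y = Prob(walk from x is at y after k steps and avoided v at steps 1..k)
   (used only with x <> v) *)
Fixpoint Qpow (n : nat) (adj : nat -> nat -> bool) (v : nat) (k : nat) (x y : nat) : R :=
  match k with
  | O => if Nat.eqb x y then 1 else 0
  | S k' => fsum n (fun z => Qpow n adj v k' x z *
                              (if Nat.eqb y v then 0 else trans n adj z y))
  end.

(* Prob_u(T_v = k), T_v = first time the walk started at u is at v *)
Definition hit_prob (n : nat) (adj : nat -> nat -> bool) (u v k : nat) : R :=
  match k with
  | O => if Nat.eqb u v then 1 else 0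
  | S k' => if Nat.eqb u v then 0
            else fsum n (fun y => Qpow n adj v k' u y * trans n adj y v)
  end.

Definition is_hitting_time (n : nat) (adj : nat -> nat -> bool) (u v : nat) (h : R) : Prop :=
  infinite_sum (fun k => INR k * hit_prob n adj u v k) h.

(* phi is the voltage when a unit current is injected at u and v is grounded;
   each edge xy is a resistor of resistance 1/c(x,y), so the current from x
   to y is c(x,y) (phi x - phi y). *)
Definition is_voltage (n : nat) (adj : nat -> nat -> bool) (u v : nat) (phi : nat -> R) : Prop :=
  phi v = 0 /\
  forall x, (x < n)%nat -> x <> v ->
    fsum n (fun y => cond n adj x y * (phi x - phi y)) = (if Nat.eqb x u then 1 else 0).

Definition is_eff_resistance (n : nat) (adj : nat -> nat -> bool) (u v : nat) (r : R) : Prop :=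
  exists phi, is_voltage n adj u v phi /\ r = phi u.

Definition has_cycle (n : nat) (g : nat -> nat -> bool) : Prop :=
  exists l : list nat, (3 <= length l)%nat /\ NoDup l /\
    (forall x, In x l -> (x < n)%nat) /\
    (forall i, (S i < length l)%nat -> g (nth i l 0%nat) (nth (S i) l 0%nat) = true) /\
    g (last l 0%nat) (hd 0%nat l) = true.

Definition spanning_tree (n : nat) (adj tadj : nat -> nat -> bool) : Prop :=
  (forall x y, tadj x y = tadj y x) /\
  (forall x y, tadj x y = true -> adj x y = true) /\
  connected n tadj /\
  ~ has_cycle n tadj.

(* sum_{e in T} R(e), each undirected edge {u,w} counted once (w < u) *)
Definition tree_sum (n : nat) (tadj : nat -> nat -> bool) (Reff : nat -> nat -> R) : R :=
  fsum n (fun u => fsum u (fun w => if tadj u w then Reff u w else 0)).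

Fixpoint path_sum (H : nat -> nat -> R) (l : list nat) : R :=
  match l with
  | x :: ((y :: _) as t) => H x y + path_sum H t
  | _ => 0
  end.

Definition cyc_sum (H : nat -> nat -> R) (l : list nat) : R :=
  match l with
  | nil => 0
  | x :: _ => path_sum H l + H (last l x) x
  end.

Definition is_CYC (n : nat) (H : nat -> nat -> R) (cyc : R) : Prop :=
  (exists s, Permutation s (seq 0 n) /\ cyc_sum H s = cyc) /\
  (forall s, Permutation s (seq 0 n) -> cyc <= cyc_sum H s).

(* Main.v *)
Require Import Defs.
From Stdlib Require Import Reals List Relations Permutation Lia Lra Classical ClassicalEpsilon Bool.
Open Scope R_scope.

Lemma fsum_ext m f g : (forall i, (i < m)%nat -> f i = g i) -> fsum m f = fsum m g.
Proof. induction m; simpl; intros; [lra|]. rewrite IHm by (intros; apply H; lia). rewrite H by lia. lra. Qed.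

Lemma fsum_le m f g : (forall i, (i < m)%nat -> f i <= g i) -> fsum m f <= fsum m g.
Proof. induction m; simpl; intros; [lra|]. assert (f m <= g m) by (apply H; lia).
 assert (fsum m f <= fsum m g) by (apply IHm; intros; apply H; lia). lra. Qed.

Lemma fsum_plus m f g : fsum m (fun i => f i + g i) = fsum m f + fsum m g.
Proof. induction m; simpl; [lra|]. rewrite IHm; lra. Qed.

Lemma fsum_minus m f g : fsum m (fun i => f i - g i) = fsum m f - fsum m g.
Proof. induction m; simpl; [lra|]. rewrite IHm; lra. Qed.

Lemma fsum_scal_l m c f : fsum m (fun i => c * f i) = c * fsum m f.
Proof. induction m; simpl; [lra|]. rewrite IHm; lra. Qed.

Lemma fsum_scal_r m c f : fsum m (fun i => f i * c) = fsum m f * c.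
Proof. induction m; simpl; [lra|]. rewrite IHm; lra. Qed.

Lemma fsum_zero m : fsum m (fun _ => 0) = 0.
Proof. induction m; simpl; [lra|]. rewrite IHm; lra. Qed.

Lemma fsum_nonneg m f : (forall i, (i < m)%nat -> 0 <= f i) -> 0 <= fsum m f.
Proof. intros. rewrite <- (fsum_zero m). apply fsum_le. auto. Qed.

Lemma fsum_swap m k f : fsum m (fun i => fsum k (fun j => f i j)) = fsum k (fun j => fsum m (fun i => f i j)).
Proof. induction m; simpl.
 - symmetry; apply fsum_zero.
 - rewrite IHm. rewrite <- fsum_plus. reflexivity. Qed.

Lemma fsum_delta m x g : (x < m)%nat -> fsum m (fun w => if Nat.eqb w x then g w else 0) = g x.
Proof. induction m; intros; [lia|]. simpl. destruct (Nat.eq_dec x m).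
 - subst. rewrite Nat.eqb_refl. rewrite (fsum_ext m _ (fun _ => 0)). rewrite fsum_zero; lra.
   intros. destruct (Nat.eqb_spec i m); [lia|auto].
 - rewrite IHm by lia. destruct (Nat.eqb_spec m x); [lia|lra]. Qed.

Lemma fsum_delta' m x g : (x < m)%nat -> fsum m (fun w => if Nat.eqb x w then g w else 0) = g x.
Proof. intros. rewrite <- (fsum_delta m x g) by auto. apply fsum_ext; intros. rewrite Nat.eqb_sym; auto. Qed.

Lemma fsum_ge_term m f k : (forall i, (i < m)%nat -> 0 <= f i) -> (k < m)%nat -> f k <= fsum m f.
Proof. induction m; intros; [lia|]. simpl. destruct (Nat.eq_dec k m).
 - subst. assert (0 <= fsum m f) by (apply fsum_nonneg; intros; apply H; lia). lra.
 - assert (f k <= fsum m f) by (apply IHm; [intros; apply H; lia| lia]). assert (0 <= f m) by (apply H; lia). lra. Qed.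

Lemma fsum_nonpos_zero m f : (forall i, (i < m)%nat -> f i <= 0) -> 0 <= fsum m f -> forall i, (i < m)%nat -> f i = 0.
Proof. intros. assert (- f i <= fsum m (fun j => - f j)).
 { apply (fsum_ge_term m (fun j => - f j)); auto. intros; specialize (H i0 H2); lra. }
 assert (fsum m (fun j => - f j) = - fsum m f).
 { replace (- fsum m f) with (-1 * fsum m f) by lra. rewrite <- (fsum_scal_l m (-1)). apply fsum_ext; intros; lra. }
 specialize (H i H1). lra. Qed.

Lemma fsum_count m (b : nat -> bool) : fsum m (fun y => if b y then 1 else 0) = INR (length (filter b (seq 0 m))).
Proof. induction m; [simpl; auto|]. cbn [fsum]. rewrite IHm. rewrite seq_S, filter_app, length_app. simpl.
 destruct (b m); simpl; rewrite ?plus_INR; simpl; lra. Qed.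

Lemma fsum_remove m v t : (v < m)%nat -> fsum m (fun y => if Nat.eqb y v then 0 else t y) = fsum m t - t v.
Proof. intros. rewrite <- (fsum_delta m v t) by auto. rewrite <- fsum_minus. apply fsum_ext; intros.
 destruct (Nat.eqb i v); lra. Qed.

Lemma sum_f_R0_fsum a K : sum_f_R0 a K = fsum (S K) a.
Proof. induction K; simpl; [lra|]. rewrite IHK. simpl. lra. Qed.

Lemma argmin_ex m (g : nat -> R) : (1 <= m)%nat -> exists x, (x < m)%nat /\ forall y, (y < m)%nat -> g x <= g y.
Proof. induction m; intros; [lia|]. destruct (Nat.eq_dec m 0).
 - subst. exists 0%nat; split; [lia|]. intros. assert (y=0%nat) by lia. subst; lra.
 - destruct IHm as [x [Hx Hm]]; [lia|]. destruct (Rle_dec (g x) (g m)).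
   + exists x; split; [lia|]. intros. destruct (Nat.eq_dec y m); [subst; auto| apply Hm; lia].
   + exists m; split; [lia|]. intros. destruct (Nat.eq_dec y m); [subst; lra|]. specialize (Hm y ltac:(lia)); lra. Qed.

Definition cdeg n adj x := fsum n (fun w => cond n adj x w).
Definition Lap n adj (g : nat -> R) x := fsum n (fun y => cond n adj x y * (g x - g y)).

Lemma In_len_pos (y : nat) l : In y l -> (1 <= length l)%nat.
Proof. destruct l; simpl; [tauto|lia]. Qed.

Lemma deg_pos n adj x y : simple_graph n adj -> adj x y = true -> (1 <= deg n adj x)%nat.
Proof. intros [Hs [Hi Hb]] Ha. unfold deg. apply (In_len_pos y). apply filter_In. split; auto.
 apply in_seq. specialize (Hb _ _ Ha). lia. Qed.

Lemma cond_pos n adj x y : simple_graph n adj -> adj x y = true -> 0 < cond n adj x y.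
Proof. intros Hs Ha. unfold cond. rewrite Ha.
 assert (1 <= deg n adj x)%nat by (eapply deg_pos; eauto).
 assert (1 <= deg n adj y)%nat. { eapply (deg_pos _ _ y x); eauto. destruct Hs as [Hsy _]. rewrite Hsy; auto. }
 assert (1 <= Nat.min (deg n adj x) (deg n adj y))%nat by lia.
 apply le_INR in H1. simpl in H1. unfold Rdiv. rewrite Rmult_1_l. apply Rinv_0_lt_compat. lra. Qed.

Lemma cond_nonneg n adj x y : simple_graph n adj -> 0 <= cond n adj x y.
Proof. intros. destruct (adj x y) eqn:E. - left; apply cond_pos; auto. - unfold cond; rewrite E; lra. Qed.

Lemma cond_false n adj x y : adj x y = false -> cond n adj x y = 0.
Proof. intros; unfold cond; rewrite H; auto. Qed.

Lemma cond_sym n adj x y : simple_graph n adj -> cond n adj x y = cond n adj y x.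
Proof. intros [Hs _]. unfold cond. rewrite Hs. rewrite Nat.min_comm. auto. Qed.

Lemma cdeg_nonneg n adj x : simple_graph n adj -> 0 <= cdeg n adj x.
Proof. intros; apply fsum_nonneg; intros; apply cond_nonneg; auto. Qed.

Lemma cdeg_pos n adj x y : simple_graph n adj -> adj x y = true -> 0 < cdeg n adj x.
Proof. intros Hs Ha. pose proof Hs as [_ [_ Hb]]. specialize (Hb _ _ Ha).
 assert (cond n adj x y <= cdeg n adj x). { apply fsum_ge_term; [intros; apply cond_nonneg; auto| lia]. }
 pose proof (cond_pos n adj x y Hs Ha). lra. Qed.

Lemma green n adj a b : simple_graph n adj ->
  fsum n (fun x => a x * Lap n adj b x) = fsum n (fun x => b x * Lap n adj a x).
Proof. intros Hs. unfold Lap.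
 assert (E: forall a b, fsum n (fun x => a x * fsum n (fun y => cond n adj x y * (b x - b y))) =
   fsum n (fun x => fsum n (fun y => cond n adj x y * (a x * b x))) - fsum n (fun x => fsum n (fun y => cond n adj x y * (a x * b y)))).
 { intros. rewrite <- fsum_minus. apply fsum_ext; intros. rewrite <- fsum_scal_l, <- fsum_minus. apply fsum_ext; intros. ring. }
 rewrite !E. f_equal. - apply fsum_ext; intros; apply fsum_ext; intros; ring.
 - rewrite fsum_swap. apply fsum_ext; intros; apply fsum_ext; intros. rewrite cond_sym by auto. ring. Qed.

Lemma conservation n adj b : simple_graph n adj -> fsum n (fun x => Lap n adj b x) = 0.
Proof. intros Hs. transitivity (fsum n (fun x => 1 * Lap n adj b x)). { apply fsum_ext; intros; ring. }
 rewrite green by auto. unfold Lap. rewrite <- (fsum_zero n). apply fsum_ext; intros.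
 rewrite (fsum_ext _ _ (fun _ => 0)); [rewrite fsum_zero; ring|]. intros; ring. Qed.

Lemma Lap_lin n adj g h a b x : Lap n adj (fun y => a * g y + b * h y) x = a * Lap n adj g x + b * Lap n adj h x.
Proof. unfold Lap. rewrite <- !fsum_scal_l, <- fsum_plus. apply fsum_ext; intros; ring. Qed.

Lemma Lap_const n adj c x : Lap n adj (fun _ => c) x = 0.
Proof. unfold Lap. rewrite <- (fsum_zero n). apply fsum_ext; intros; ring. Qed.

Lemma Lap_sum n adj m (a : nat -> R) (h : nat -> nat -> R) x :
  Lap n adj (fun y => fsum m (fun w => a w * h w y)) x = fsum m (fun w => a w * Lap n adj (h w) x).
Proof. unfold Lap. transitivity (fsum n (fun y => fsum m (fun w => a w * (cond n adj x y * (h w x - h w y))))).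
 - apply fsum_ext; intros. rewrite <- fsum_minus, <- fsum_scal_l. apply fsum_ext; intros; ring.
 - rewrite fsum_swap. apply fsum_ext; intros. rewrite <- fsum_scal_l. reflexivity. Qed.

Lemma Lap_ext n adj g h x : (forall y, (y < n)%nat -> g y = h y) -> (x < n)%nat -> Lap n adj g x = Lap n adj h x.
Proof. intros E Hx. unfold Lap. apply fsum_ext; intros. rewrite !E by auto. auto. Qed.

Lemma min_principle n adj v g : (1 <= n)%nat -> simple_graph n adj -> connected n adj -> (v < n)%nat -> g v = 0 ->
  (forall x, (x < n)%nat -> x <> v -> 0 <= Lap n adj g x) -> forall x, (x < n)%nat -> 0 <= g x.
Proof. intros Hn Hs Hc Hv Hgv HL.
 destruct (argmin_ex n g Hn) as [x0 [Hx0 Hmin]].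
 intros xx Hxx. destruct (Rle_dec 0 (g x0)). { specialize (Hmin xx Hxx); lra. }
 exfalso. set (m := g x0) in *.
 assert (Nb: forall x y, (x < n)%nat -> x <> v -> g x = m -> adj x y = true -> g y = m).
 { intros a y Ha Hav Hga Hay. pose proof Hs as [_ [_ Hb]]. destruct (Hb _ _ Hay) as [_ Hy].
   assert (Z := fsum_nonpos_zero n (fun y => cond n adj a y * (g a - g y))).
   assert (cond n adj a y * (g a - g y) = 0).
   { apply Z; auto. - intros. assert (0 <= cond n adj a i) by (apply cond_nonneg; auto).
       specialize (Hmin i H). assert (g a - g i <= 0) by lra. nra. - apply HL; auto. }
   pose proof (cond_pos n adj a y Hs Hay). apply Rmult_integral in H. destruct H; [lra|].
   specialize (Hmin y Hy). lra. }
 assert (P: forall a z, clos_refl_trans_1n nat (fun x y => adj x y = true) a z -> g a = m -> (a < n)%nat -> g z = m \/ g v = m).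
 { intros a z Hp. induction Hp; intros; [left; auto|]. destruct (Nat.eq_dec x v). { subst. right; auto. }
   apply IHHp. - eapply Nb; eauto. - pose proof Hs as [_ [_ Hb]]. destruct (Hb _ _ H); auto. }
 assert (g v = m). { destruct (P x0 v (clos_rt_rt1n _ _ _ _ (Hc x0 v Hx0 Hv)) eq_refl Hx0); auto. }
 lra. Qed.

Definition VOLT n adj (Phi : nat -> nat -> nat -> R) :=
  forall u v, (u < n)%nat -> (v < n)%nat -> u <> v -> is_voltage n adj u v (Phi u v).

Lemma Lap_volt n adj Phi u v x : VOLT n adj Phi -> (u < n)%nat -> (v < n)%nat -> u <> v -> (x < n)%nat -> x <> v ->
  Lap n adj (Phi u v) x = if Nat.eqb x u then 1 else 0.
Proof. intros HV. intros. destruct (HV u v H H0 H1) as [_ E]. apply E; auto. Qed.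

Lemma volt_zero n adj Phi u v : VOLT n adj Phi -> (u < n)%nat -> (v < n)%nat -> u <> v -> Phi u v v = 0.
Proof. intros HV. intros. destruct (HV u v H H0 H1) as [E _]. auto. Qed.

Lemma volt_nonneg n adj Phi u v x : (1 <= n)%nat -> simple_graph n adj -> connected n adj -> VOLT n adj Phi ->
  (u < n)%nat -> (v < n)%nat -> u <> v -> (x < n)%nat -> 0 <= Phi u v x.
Proof. intros. apply (min_principle n adj v); auto. - eapply volt_zero; eauto.
 - intros. rewrite (Lap_volt n adj Phi u v) by auto. destruct (Nat.eqb x0 u); lra. Qed.

Lemma uniq n adj Phi b g : simple_graph n adj -> VOLT n adj Phi -> (b < n)%nat -> g b = 0 ->
  (forall x, (x < n)%nat -> x <> b -> Lap n adj g x = 0) -> forall w, (w < n)%nat -> g w = 0.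
Proof. intros Hs HV Hb Hgb HL w Hw. destruct (Nat.eq_dec w b). { subst; auto. }
 pose proof (green n adj g (Phi w b) Hs) as G.
 rewrite (fsum_ext n (fun x => Phi w b x * Lap n adj g x) (fun _ => 0)) in G.
 2:{ intros. destruct (Nat.eq_dec i b). - subst. rewrite (volt_zero n adj Phi w b) by auto. ring.
     - rewrite HL by auto. ring. }
 rewrite fsum_zero in G. rewrite (fsum_ext n _ (fun x => if Nat.eqb x w then g x else 0)) in G.
 2:{ intros. destruct (Nat.eq_dec i b). - subst. rewrite Hgb. destruct (Nat.eqb b w); ring.
     - rewrite (Lap_volt n adj Phi w b) by auto. destruct (Nat.eqb i w); ring. }
 rewrite fsum_delta in G by auto. auto. Qed.

Definition Psi (Phi : nat -> nat -> nat -> R) w c : nat -> R := if Nat.eqb w c then (fun _ => 0) else Phi w c.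
Definition Fh n adj Phi c a := fsum n (fun w => cdeg n adj w * Psi Phi w c a).
Definition Ctot n adj := fsum n (fun w => cdeg n adj w).

Lemma Ctot_nonneg n adj : simple_graph n adj -> 0 <= Ctot n adj.
Proof. intros; apply fsum_nonneg; intros; apply cdeg_nonneg; auto. Qed.

Lemma Lap_comb n adj g1 k g2 C g3 x :
  Lap n adj (fun y => g1 y + k - g2 y - C * g3 y) x = Lap n adj g1 x - Lap n adj g2 x - C * Lap n adj g3 x.
Proof. unfold Lap. rewrite <- fsum_scal_l, <- !fsum_minus. apply fsum_ext; intros; ring. Qed.

Lemma Lap_at_ground n adj g c : simple_graph n adj -> (c < n)%nat ->
  Lap n adj g c = - fsum n (fun x => if Nat.eqb x c then 0 else Lap n adj g x).
Proof. intros Hs Hc. rewrite fsum_remove by auto. rewrite conservation by auto. ring. Qed.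

Section S.
Context (n : nat) (adj : nat -> nat -> bool) (Phi : nat -> nat -> nat -> R)
  (Hn : (1 <= n)%nat) (Hs : simple_graph n adj) (Hc : connected n adj) (HV : VOLT n adj Phi).

Lemma Psi_nonneg w c a : (w < n)%nat -> (c < n)%nat -> (a < n)%nat -> 0 <= Psi Phi w c a.
Proof. intros. unfold Psi. destruct (Nat.eqb_spec w c); [lra|]. eapply volt_nonneg; eauto. Qed.

Lemma F_nonneg c a : (c < n)%nat -> (a < n)%nat -> 0 <= Fh n adj Phi c a.
Proof. intros. apply fsum_nonneg; intros. apply Rmult_le_pos; [apply cdeg_nonneg; auto| apply Psi_nonneg; auto]. Qed.

Lemma F_self c : (c < n)%nat -> Fh n adj Phi c c = 0.
Proof. intros. unfold Fh. rewrite <- (fsum_zero n). apply fsum_ext; intros. unfold Psi.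
 destruct (Nat.eqb_spec i c); [ring|]. rewrite (volt_zero n adj Phi i c) by auto. ring. Qed.

Lemma LapF c x : (c < n)%nat -> (x < n)%nat -> x <> c -> Lap n adj (Fh n adj Phi c) x = cdeg n adj x.
Proof. intros. unfold Fh. rewrite Lap_sum.
 rewrite <- (fsum_delta' n x (fun w => cdeg n adj w)) by auto. apply fsum_ext; intros. unfold Psi.
 destruct (Nat.eqb_spec i c).
 - subst. rewrite Lap_const. destruct (Nat.eqb_spec x c); [lia|ring].
 - rewrite (Lap_volt n adj Phi i c) by auto. destruct (Nat.eqb x i); ring. Qed.

Lemma LapF_c c : (c < n)%nat -> Lap n adj (Fh n adj Phi c) c = cdeg n adj c - Ctot n adj.
Proof. intros. rewrite Lap_at_ground by auto.
 rewrite (fsum_ext n _ (fun x => if Nat.eqb x c then 0 else cdeg n adj x)).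
 - rewrite fsum_remove by auto. unfold Ctot. change (fsum n (fun w => cdeg n adj w)) with (fsum n (cdeg n adj)). lra.
 - intros. destruct (Nat.eqb_spec i c); auto. apply LapF; auto. Qed.

Lemma F_triangle a b c : (a < n)%nat -> (b < n)%nat -> (c < n)%nat ->
  Fh n adj Phi c a <= Fh n adj Phi b a + Fh n adj Phi c b.
Proof. intros Ha Hb Hcc. destruct (Nat.eq_dec b c). { subst. rewrite F_self by auto. lra. }
 set (G := fun y => Fh n adj Phi b y + Fh n adj Phi c b - Fh n adj Phi c y - Ctot n adj * Phi c b y).
 assert (G a = 0).
 { apply (uniq n adj Phi b G Hs HV Hb).
   - unfold G. rewrite F_self by auto. rewrite (volt_zero n adj Phi c b) by auto. ring.
   - intros. unfold G. rewrite Lap_comb. destruct (Nat.eq_dec x c).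
     + subst. rewrite LapF by auto. rewrite LapF_c by auto. rewrite (Lap_volt n adj Phi c b) by auto.
       rewrite Nat.eqb_refl. ring.
     + rewrite !LapF by auto. rewrite (Lap_volt n adj Phi c b) by auto.
       destruct (Nat.eqb_spec x c); [lia|]. ring.
   - auto. }
 unfold G in H. assert (0 <= Ctot n adj * Phi c b a).
 { apply Rmult_le_pos; [apply Ctot_nonneg; auto| eapply volt_nonneg; eauto]. }
 lra. Qed.

Lemma F_commute u w : (u < n)%nat -> (w < n)%nat -> u <> w ->
  Fh n adj Phi w u + Fh n adj Phi u w = Ctot n adj * Phi u w u.
Proof. intros Hu Hw Huw.
 set (G := fun y => Fh n adj Phi w y + Fh n adj Phi u w - Fh n adj Phi u y - Ctot n adj * Phi u w y).
 assert (G u = 0).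
 { apply (uniq n adj Phi w G Hs HV Hw).
   - unfold G. rewrite F_self by auto. rewrite (volt_zero n adj Phi u w) by auto. ring.
   - intros. unfold G. rewrite Lap_comb. destruct (Nat.eq_dec x u).
     + subst. rewrite LapF by auto. rewrite LapF_c by auto. rewrite (Lap_volt n adj Phi u w) by auto.
       rewrite Nat.eqb_refl. ring.
     + rewrite !LapF by auto. rewrite (Lap_volt n adj Phi u w) by auto.
       destruct (Nat.eqb_spec x u); [lia|]. ring.
   - auto. }
 unfold G in H. rewrite F_self in H by auto. lra. Qed.

End S.

Lemma infsum_le a h B : infinite_sum a h -> (forall K, sum_f_R0 a K <= B) -> h <= B.
Proof. intros Hi HB. destruct (Rle_dec h B); auto. exfalso.
 destruct (Hi (h - B)) as [N HN]; [lra|]. specialize (HN N (le_n N)). unfold R_dist in HN.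
 apply Rabs_def2 in HN. specialize (HB N). lra. Qed.

Lemma infsum_ge a h B : infinite_sum a h -> (forall K, B <= sum_f_R0 a K) -> B <= h.
Proof. intros Hi HB. destruct (Rle_dec B h); auto. exfalso.
 destruct (Hi (B - h)) as [N HN]; [lra|]. specialize (HN N (le_n N)). unfold R_dist in HN.
 apply Rabs_def2 in HN. specialize (HB N). lra. Qed.

Lemma H_diag n adj u h : is_hitting_time n adj u u h -> h = 0.
Proof. unfold is_hitting_time. intros Hi.
 assert (forall K, sum_f_R0 (fun k => INR k * hit_prob n adj u u k) K = 0).
 { induction K; simpl. - lra. - rewrite IHK. rewrite Nat.eqb_refl. lra. }
 apply Rle_antisym; [apply (infsum_le _ _ 0 Hi)|apply (infsum_ge _ _ 0 Hi)]; intros; rewrite H; lra. Qed.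

Section L.
Context (n : nat) (adj : nat -> nat -> bool) (u v : nat) (f : nat -> R)
  (Hs : simple_graph n adj) (Hu : (u < n)%nat) (Hv : (v < n)%nat) (Huv : u <> v)
  (Hcd : forall z, (z < n)%nat -> 0 < cdeg n adj z)
  (Hf0 : forall z, (z < n)%nat -> 0 <= f z) (Hfv : f v = 0)
  (HfL : forall z, (z < n)%nat -> z <> v -> Lap n adj f z = cdeg n adj z).

Lemma trans_eq z y : trans n adj z y = cond n adj z y * / cdeg n adj z.
Proof. reflexivity. Qed.

Lemma trans_nonneg z y : (z < n)%nat -> 0 <= trans n adj z y.
Proof. intros. rewrite trans_eq. apply Rmult_le_pos; [apply cond_nonneg; auto|].
 left; apply Rinv_0_lt_compat; auto. Qed.

Lemma trans_sum z : (z < n)%nat -> fsum n (fun y => trans n adj z y) = 1.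
Proof. intros. rewrite (fsum_ext _ _ (fun y => cond n adj z y * / cdeg n adj z)) by (intros; apply trans_eq).
 rewrite fsum_scal_r. fold (cdeg n adj z). apply Rinv_r. specialize (Hcd z H); lra. Qed.

Lemma trans_f z : (z < n)%nat -> z <> v -> fsum n (fun y => trans n adj z y * f y) = f z - 1.
Proof. intros. pose proof (HfL z H H0) as E. unfold Lap in E.
 rewrite (fsum_ext _ _ (fun y => f z * cond n adj z y - cond n adj z y * f y)) in E by (intros; ring).
 rewrite fsum_minus, fsum_scal_l in E. change (fsum n (cond n adj z)) with (cdeg n adj z) in E.
 rewrite (fsum_ext _ _ (fun y => (cond n adj z y * f y) * / cdeg n adj z)) by (intros; rewrite trans_eq; ring).
 rewrite fsum_scal_r. specialize (Hcd z H).
 replace (fsum n (fun y => cond n adj z y * f y)) with (cdeg n adj z * (f z - 1)) by nra.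
 field. lra. Qed.

Lemma Q_nonneg k y : 0 <= Qpow n adj v k u y.
Proof. revert y; induction k; intros; simpl. - destruct (Nat.eqb u y); lra.
 - apply fsum_nonneg; intros. apply Rmult_le_pos; auto. destruct (Nat.eqb y v); [lra|]. apply trans_nonneg; auto. Qed.

Lemma Q_v k : Qpow n adj v k u v = 0.
Proof. destruct k; simpl. - destruct (Nat.eqb_spec u v); [lia|auto].
 - rewrite Nat.eqb_refl. transitivity (fsum n (fun _ => 0)); [apply fsum_ext; intros; ring| apply fsum_zero]. Qed.

Definition pp k := fsum n (fun y => Qpow n adj v k u y).
Definition mm k := fsum n (fun y => Qpow n adj v k u y * f y).

Lemma Qswap k (g : nat -> R) : fsum n (fun y => Qpow n adj v (S k) u y * g y) =
  fsum n (fun z => Qpow n adj v k u z * fsum n (fun y => (if Nat.eqb y v then 0 else trans n adj z y) * g y)).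
Proof. simpl. rewrite (fsum_ext _ _ (fun y => fsum n (fun z => Qpow n adj v k u z * ((if Nat.eqb y v then 0 else trans n adj z y) * g y)))).
 - rewrite fsum_swap. apply fsum_ext; intros. rewrite fsum_scal_l. reflexivity.
 - intros. rewrite <- fsum_scal_r. apply fsum_ext; intros; ring. Qed.

Lemma mm_step k : mm (S k) = mm k - pp k.
Proof. unfold mm, pp. rewrite Qswap. rewrite <- fsum_minus. apply fsum_ext; intros z Hz.
 destruct (Nat.eq_dec z v). { subst. rewrite Q_v. ring. }
 rewrite (fsum_ext _ _ (fun y => if Nat.eqb y v then 0 else trans n adj z y * f y)) by (intros; destruct (Nat.eqb i v); ring).
 rewrite fsum_remove by auto. rewrite trans_f by auto. rewrite Hfv. ring. Qed.

Lemma pp_step k : pp k - pp (S k) = hit_prob n adj u v (S k).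
Proof. unfold hit_prob. destruct (Nat.eqb_spec u v); [lia|].
 unfold pp. rewrite (fsum_ext n (fun y => Qpow n adj v (S k) u y) (fun y => Qpow n adj v (S k) u y * 1)) by (intros; ring).
 rewrite Qswap. rewrite <- fsum_minus. apply fsum_ext; intros z Hz.
 rewrite (fsum_ext _ _ (fun y => if Nat.eqb y v then 0 else trans n adj z y)) by (intros; destruct (Nat.eqb i v); ring).
 rewrite fsum_remove by auto. rewrite trans_sum by auto. ring. Qed.

Lemma partial_id K : fsum (S K) (fun k => INR k * hit_prob n adj u v k) + INR K * pp K = fsum K pp.
Proof. induction K. - simpl. ring.
 - change (fsum (S (S K)) (fun k => INR k * hit_prob n adj u v k)) with
     (fsum (S K) (fun k => INR k * hit_prob n adj u v k) + INR (S K) * hit_prob n adj u v (S K)).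
   rewrite <- pp_step. simpl fsum at 2. rewrite S_INR. lra. Qed.

Lemma pp_sum K : fsum K pp = mm 0 - mm K.
Proof. induction K. - simpl. ring. - simpl. rewrite IHK, mm_step. ring. Qed.

Lemma mm0 : mm 0 = f u.
Proof. unfold mm. simpl. rewrite (fsum_ext _ _ (fun y => if Nat.eqb u y then f y else 0)).
 - apply fsum_delta'; auto. - intros. destruct (Nat.eqb u i); ring. Qed.

Lemma lyapunov h : is_hitting_time n adj u v h -> h <= f u.
Proof. intros Hi. apply (infsum_le _ _ _ Hi). intros K. rewrite sum_f_R0_fsum.
 pose proof (partial_id K). rewrite pp_sum, mm0 in H.
 assert (0 <= mm K) by (apply fsum_nonneg; intros; apply Rmult_le_pos; [apply Q_nonneg|auto]).
 assert (0 <= INR K * pp K) by (apply Rmult_le_pos; [apply pos_INR| apply fsum_nonneg; intros; apply Q_nonneg]).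
 lra. Qed.
End L.

Lemma has_nb n adj x : (2 <= n)%nat -> connected n adj -> (x < n)%nat -> exists y, adj x y = true.
Proof. intros Hn Hc Hx. set (z := if Nat.eqb x 0 then 1%nat else 0%nat).
 assert (z < n /\ z <> x)%nat as [Hz Hzx] by (unfold z; destruct (Nat.eqb_spec x 0); lia).
 pose proof (clos_rt_rt1n _ _ _ _ (Hc x z Hx Hz)) as P. clearbody z. destruct P. - lia. - eauto. Qed.

Lemma cdeg_pos_all n adj x : (2 <= n)%nat -> simple_graph n adj -> connected n adj -> (x < n)%nat -> 0 < cdeg n adj x.
Proof. intros. destruct (has_nb n adj x) as [y Hy]; auto. eapply cdeg_pos; eauto. Qed.

Lemma deg_pos_all n adj x : (2 <= n)%nat -> simple_graph n adj -> connected n adj -> (x < n)%nat -> (1 <= deg n adj x)%nat.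
Proof. intros. destruct (has_nb n adj x) as [y Hy]; auto. eapply deg_pos; eauto. Qed.

Lemma fsum_one m : fsum m (fun _ => 1) = INR m.
Proof. induction m; simpl fsum; [simpl; lra|]. rewrite IHm, S_INR. lra. Qed.

Lemma inv_min a b : (1 <= a)%nat -> (1 <= b)%nat ->
  1 / INR (Nat.min a b) = / INR a + / INR b - / INR (Nat.max a b).
Proof. intros. destruct (Nat.le_ge_cases a b).
 - rewrite Nat.min_l, Nat.max_r by auto. field. split; apply not_0_INR; lia.
 - rewrite Nat.min_r, Nat.max_l by auto. field. split; apply not_0_INR; lia. Qed.

Lemma row_deg n adj x : (1 <= deg n adj x)%nat -> fsum n (fun y => if adj x y then / INR (deg n adj x) else 0) = 1.
Proof. intros. rewrite (fsum_ext _ _ (fun y => (if adj x y then 1 else 0) * / INR (deg n adj x))) by (intros; destruct (adj x i); ring).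
 rewrite fsum_scal_r, fsum_count. fold (deg n adj x). apply Rinv_r. apply not_0_INR; lia. Qed.

Lemma Ctot_bound n adj : (2 <= n)%nat -> simple_graph n adj -> connected n adj -> Ctot n adj <= 2 * INR (n - 1).
Proof. intros Hn Hs Hc. pose proof Hs as [Hsym [Hirr Hb]].
 set (D := fun x => deg n adj x).
 set (M := fun x y => if adj x y then / INR (Nat.max (D x) (D y)) else 0).
 assert (HD: forall x, (x < n)%nat -> (1 <= D x)%nat) by (intros; apply deg_pos_all; auto).
 assert (E: Ctot n adj = fsum n (fun x => fsum n (fun y => (if adj x y then / INR (D x) else 0)))
     + fsum n (fun x => fsum n (fun y => (if adj x y then / INR (D y) else 0))) - fsum n (fun x => fsum n (fun y => M x y))).
 { unfold Ctot, cdeg. rewrite <- fsum_plus, <- fsum_minus. apply fsum_ext; intros x Hx.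
   rewrite <- fsum_plus, <- fsum_minus. apply fsum_ext; intros y Hy. unfold cond, M.
   destruct (adj x y) eqn:A; [|ring]. apply inv_min; apply HD; auto. }
 assert (E1: fsum n (fun x => fsum n (fun y => (if adj x y then / INR (D x) else 0))) = INR n).
 { rewrite <- fsum_one. apply fsum_ext; intros. apply row_deg. apply HD; auto. }
 assert (E2: fsum n (fun x => fsum n (fun y => (if adj x y then / INR (D y) else 0))) = INR n).
 { rewrite fsum_swap. rewrite <- fsum_one. apply fsum_ext; intros. rewrite <- (row_deg n adj i) by (apply HD; auto).
   apply fsum_ext; intros. rewrite Hsym. reflexivity. }
 destruct (argmin_ex n (fun x => - INR (D x))) as [v [Hv Hmax]]; [lia|].
 assert (Mnn: forall x y, 0 <= M x y).
 { intros. unfold M. destruct (adj x y) eqn:A; [|lra]. left. apply Rinv_0_lt_compat.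
   apply lt_0_INR. destruct (Hb _ _ A). specialize (HD x H). lia. }
 assert (Mrow: fsum n (fun y => M v y) = 1).
 { rewrite <- (row_deg n adj v) by (apply HD; auto). apply fsum_ext; intros. unfold M.
   destruct (adj v i); auto. specialize (Hmax i H). assert (D i <= D v)%nat.
   { apply INR_le. lra. } rewrite Nat.max_l by auto. reflexivity. }
 assert (Msym: forall x y, M x y = M y x) by (intros; unfold M; rewrite Hsym, Nat.max_comm; auto).
 assert (G: 2 <= fsum n (fun x => fsum n (fun y => M x y))).
 { apply Rle_trans with (fsum n (fun x => fsum n (fun y => M x y * ((if Nat.eqb x v then 1 else 0) + (if Nat.eqb y v then 1 else 0))))).
   - rewrite (fsum_ext n _ (fun x => (if Nat.eqb x v then fsum n (fun y => M x y) else 0) + fsum n (fun y => if Nat.eqb y v then M x y else 0))).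
     + rewrite !fsum_plus. rewrite fsum_delta by auto. rewrite Mrow.
       rewrite (fsum_ext n _ (fun x => M v x)). * rewrite Mrow. lra.
       * intros. rewrite fsum_delta by auto. auto.
     + intros x Hx. destruct (Nat.eqb x v).
       * rewrite <- fsum_plus. apply fsum_ext; intros. destruct (Nat.eqb i v); ring.
       * rewrite Rplus_0_l. apply fsum_ext; intros. destruct (Nat.eqb i v); ring.
   - apply fsum_le; intros x Hx. apply fsum_le; intros y Hy.
     destruct (Nat.eqb_spec x v), (Nat.eqb_spec y v).
     + subst. unfold M. rewrite Hirr. lra.
     + specialize (Mnn x y). lra. + specialize (Mnn x y). lra. + specialize (Mnn x y). lra. }
 rewrite E, E1, E2. rewrite minus_INR by lia. simpl INR. lra. Qed.

Lemma ps_cons (d : nat -> nat -> R) a L : L <> nil -> path_sum d (a :: L) = d a (hd 0%nat L) + path_sum d L.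
Proof. destruct L; [congruence|]. reflexivity. Qed.

Lemma ps_app1 d l z : l <> nil -> path_sum d (l ++ z :: nil) = path_sum d l + d (last l 0%nat) z.
Proof. induction l as [|a l IH]; intros; [congruence|]. destruct l as [|b l].
 - simpl. ring.
 - change ((a :: b :: l) ++ z :: nil) with (a :: ((b :: l) ++ z :: nil)).
   rewrite ps_cons by (destruct l; simpl; congruence). rewrite IH by congruence.
   rewrite (ps_cons d a (b :: l)) by congruence. simpl hd. replace (last (a :: b :: l) 0%nat) with (last (b :: l) 0%nat) by reflexivity. ring. Qed.

Lemma last_cons_indep (h : nat) t a b : last (h :: t) a = last (h :: t) b.
Proof. revert h; induction t as [|c t IH]; intros; [reflexivity|].
 change (last (h :: c :: t) a = last (h :: c :: t) b) with (last (c :: t) a = last (c :: t) b). apply IH. Qed.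

Lemma cyc_eq d s : s <> nil -> cyc_sum d s = path_sum d (s ++ hd 0%nat s :: nil).
Proof. intros. destruct s as [|h t]; [congruence|]. rewrite ps_app1 by congruence. change (cyc_sum d (h :: t)) with (path_sum d (h :: t) + d (last (h :: t) h) h).
 rewrite (last_cons_indep h t h 0%nat). reflexivity. Qed.

Lemma hd_app_cons (l1 : list nat) x l2 l3 : hd 0%nat (l1 ++ x :: l2) = hd 0%nat (l1 ++ x :: l3).
Proof. destruct l1; reflexivity. Qed.

Lemma ps_insert d x y w t l1 : d y w <= d y x + d x w ->
  path_sum d (l1 ++ x :: y :: w :: t) <= path_sum d (l1 ++ x :: w :: t) + d x y + d y x.
Proof. intros Ht. induction l1 as [|a l1 IH].
 - simpl app. rewrite !(ps_cons d x) by congruence. rewrite (ps_cons d y) by congruence. simpl hd. lra.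
 - simpl app. rewrite !(ps_cons d a) by (apply not_eq_sym, app_cons_not_nil).
   rewrite (hd_app_cons l1 x (y :: w :: t) (w :: t)). lra. Qed.

Lemma hd_In (s : list nat) : s <> nil -> In (hd 0%nat s) s.
Proof. destruct s; simpl; [congruence| auto]. Qed.

Lemma cyc_insert d l1 x y l2 : (forall w, In w (l1 ++ x :: l2) -> d y w <= d y x + d x w) ->
  cyc_sum d (l1 ++ x :: y :: l2) <= cyc_sum d (l1 ++ x :: l2) + d x y + d y x.
Proof. intros Ht. rewrite !cyc_eq by (apply not_eq_sym, app_cons_not_nil).
 rewrite (hd_app_cons l1 x (y :: l2) l2). set (h := hd 0%nat (l1 ++ x :: l2)).
 assert (Hh: In h (l1 ++ x :: l2)) by (apply hd_In, not_eq_sym, app_cons_not_nil).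
 rewrite <- !app_assoc. simpl app.
 destruct (l2 ++ h :: nil) as [|w t] eqn:E. { destruct l2; simpl in E; congruence. }
 apply ps_insert. apply Ht.
 assert (In w (l2 ++ h :: nil)) by (rewrite E; simpl; auto). apply in_app_or in H. destruct H as [H|[H|[]]].
 - apply in_or_app; right; simpl; auto. - subst; auto. Qed.

Definition mem (s : list nat) u := existsb (Nat.eqb u) s.

Lemma mem_In s u : mem s u = true <-> In u s.
Proof. unfold mem. rewrite existsb_exists. split.
 - intros [x [Hx E]]. apply Nat.eqb_eq in E. subst; auto.
 - intros. exists u; split; auto. apply Nat.eqb_refl. Qed.

Lemma cross (T : nat -> nat -> bool) s a z : In a s -> ~ In z s -> clos_refl_trans_1n nat (fun x y => T x y = true) a z ->
  exists x y, In x s /\ ~ In y s /\ T x y = true.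
Proof. intros Ha Hz P. induction P. - contradiction.
 - destruct (classic (In y s)). + apply IHP; auto. + exists x, y; auto. Qed.

Section Tour.
Context (n : nat) (T : nat -> nat -> bool) (d : nat -> nat -> R) (Hn : (1 <= n)%nat)
  (Htri : forall a b c, (a < n)%nat -> (b < n)%nat -> (c < n)%nat -> d a c <= d a b + d b c)
  (Hdd : forall a, (a < n)%nat -> d a a = 0)
  (HT : forall x y, T x y = true -> (x < n)%nat /\ (y < n)%nat)
  (Tsym : forall x y, T x y = T y x)
  (Tconn : connected n T)
  (Dnn : forall u w, (u < n)%nat -> (w < n)%nat -> 0 <= d u w + d w u).

Definition Esum (mb : nat -> bool) := fsum n (fun u => fsum u (fun w => if (T u w && mb u && mb w)%bool then d u w + d w u else 0)).

Lemma Esum_nonneg mb : 0 <= Esum mb.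
Proof. apply fsum_nonneg; intros; apply fsum_nonneg; intros. destruct ((T i i0 && mb i && mb i0)%bool); [apply Dnn; lia| lra]. Qed.

Lemma Esum_step mb mb' x y : (forall u, mb u = true -> mb' u = true) -> mb' x = true -> mb' y = true -> mb y = false ->
  T x y = true -> x <> y -> Esum mb + (d x y + d y x) <= Esum mb'.
Proof. intros Hm Hx Hy Hy' Txy Hxy. destruct (HT x y Txy) as [Hxn Hyn].
 set (diff := fun u w => (if (T u w && mb' u && mb' w)%bool then d u w + d w u else 0) - (if (T u w && mb u && mb w)%bool then d u w + d w u else 0)).
 assert (Hd: forall u w, (w < u)%nat -> (u < n)%nat -> 0 <= diff u w).
 { intros. unfold diff. pose proof (Dnn u w ltac:(lia) ltac:(lia)). destruct (T u w) eqn:A; simpl; [|lra].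
   destruct (mb u) eqn:B; destruct (mb w) eqn:C; simpl; rewrite ?(Hm u), ?(Hm w) by auto; simpl;
   destruct (mb' u), (mb' w); simpl; lra. }
 assert (E: Esum mb' = Esum mb + fsum n (fun u => fsum u (fun w => diff u w))).
 { unfold Esum. rewrite <- fsum_plus. apply fsum_ext; intros. rewrite <- fsum_plus. apply fsum_ext; intros. unfold diff. ring. }
 set (u0 := Nat.max x y). set (w0 := Nat.min x y).
 assert (diff u0 w0 = d x y + d y x).
 { unfold diff, u0, w0. destruct (Nat.le_ge_cases x y).
   - rewrite Nat.max_r, Nat.min_l by auto. rewrite Tsym, Txy, Hx, Hy, Hy'. simpl. destruct (mb x); simpl; ring.
   - rewrite Nat.max_l, Nat.min_r by auto. rewrite Txy, Hx, Hy, Hy'. simpl. destruct (mb x); simpl; ring. }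
 assert (diff u0 w0 <= fsum n (fun u => fsum u (fun w => diff u w))).
 { apply Rle_trans with (fsum u0 (fun w => diff u0 w)).
   - apply fsum_ge_term; [intros; apply Hd; unfold u0 in *; lia| unfold u0, w0; lia].
   - apply (fsum_ge_term n (fun u => fsum u (fun w => diff u w))); [|unfold u0; lia].
     intros; apply fsum_nonneg; intros; apply Hd; lia. }
 lra. Qed.

Lemma tour k : (1 <= k <= n)%nat -> exists s, length s = k /\ NoDup s /\ (forall x, In x s -> (x < n)%nat) /\ cyc_sum d s <= Esum (mem s).
Proof. induction k as [|k IH]; intros Hk; [lia|]. destruct (Nat.eq_dec k 0).
 - subst. exists (0%nat :: nil). split; [auto|]. split; [constructor; [simpl; auto| constructor]|]. split.
   + intros x [H|[]]; lia.
   + simpl. rewrite Hdd by lia. pose proof (Esum_nonneg (mem (0%nat :: nil))). lra.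
 - destruct IH as [s [Hl [Hnd [Hin Hc]]]]; [lia|].
   assert (exists z, (z < n)%nat /\ ~ In z s) as [z [Hz Hzs]].
   { apply NNPP. intros Hno. assert (incl (seq 0 n) s).
     { intros z Hz. apply in_seq in Hz. apply NNPP. intros Hzs. apply Hno. exists z; split; auto; lia. }
     apply NoDup_incl_length in H; [|apply seq_NoDup]. rewrite length_seq in H. lia. }
   assert (Hs0: s <> nil) by (destruct s; simpl in Hl; [lia|congruence]).
   destruct (cross T s (hd 0%nat s) z) as [x [y [Hxs [Hys Txy]]]].
   + apply hd_In; auto. + auto.
   + apply clos_rt_rt1n. apply Tconn; auto. apply Hin, hd_In; auto.
   + destruct (HT x y Txy) as [Hxn Hyn]. destruct (in_split x s Hxs) as [l1 [l2 Es]].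
     assert (Hp: Permutation (y :: s) (l1 ++ x :: y :: l2)).
     { rewrite Es. replace (l1 ++ x :: l2) with ((l1 ++ x :: nil) ++ l2) by (rewrite <- app_assoc; reflexivity).
       replace (l1 ++ x :: y :: l2) with ((l1 ++ x :: nil) ++ y :: l2) by (rewrite <- app_assoc; reflexivity).
       apply Permutation_middle. }
     exists (l1 ++ x :: y :: l2). split; [|split; [|split]].
     * rewrite <- (Permutation_length Hp). simpl. lia.
     * apply (Permutation_NoDup Hp). constructor; auto.
     * intros w Hw. apply (Permutation_in _ (Permutation_sym Hp)) in Hw. destruct Hw as [Hw|Hw]; [subst; auto| auto].
     * assert (Hxy: x <> y) by (intro; subst; contradiction).
       pose proof (cyc_insert d l1 x y l2) as Ci. rewrite <- Es in Ci.
       assert (cyc_sum d (l1 ++ x :: y :: l2) <= cyc_sum d s + d x y + d y x).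
       { apply Ci. intros w Hw. apply Htri; auto. }
       assert (Esum (mem s) + (d x y + d y x) <= Esum (mem (l1 ++ x :: y :: l2))).
       { apply Esum_step.
         - intros u Hu. apply mem_In in Hu. apply mem_In. apply (Permutation_in _ Hp). simpl; auto.
         - apply mem_In. apply (Permutation_in _ Hp). simpl; auto.
         - apply mem_In. apply (Permutation_in _ Hp). simpl; auto.
         - destruct (mem s y) eqn:M; auto. apply mem_In in M. contradiction.
         - auto. - auto. }
       lra. Qed.

Lemma tour_full : exists s, Permutation s (seq 0 n) /\
  cyc_sum d s <= fsum n (fun u => fsum u (fun w => if T u w then d u w + d w u else 0)).
Proof. destruct (tour n) as [s [Hl [Hnd [Hin Hc]]]]; [lia|].
 assert (Hp: Permutation s (seq 0 n)).
 { apply NoDup_Permutation_bis; auto. - rewrite length_seq; lia. - intros x Hx. apply in_seq. specialize (Hin x Hx). lia. }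
 exists s. split; auto. unfold Esum in Hc.
 rewrite (fsum_ext n _ (fun u => fsum u (fun w => if T u w then d u w + d w u else 0))) in Hc; auto.
 intros u Hu. apply fsum_ext; intros w Hw.
 assert (mem s u = true) by (apply mem_In, (Permutation_in _ (Permutation_sym Hp)), in_seq; lia).
 assert (mem s w = true) by (apply mem_In, (Permutation_in _ (Permutation_sym Hp)), in_seq; lia).
 rewrite H, H0. destruct (T u w); auto. Qed.
End Tour.

Lemma ps_mono (H d : nat -> nat -> R) l : (forall a b, In a l -> In b l -> H a b <= d a b) -> path_sum H l <= path_sum d l.
Proof. induction l as [|a l IH]; intros Hl; [simpl; lra|]. destruct l as [|b l]; [simpl; lra|].
 change (path_sum H (a :: b :: l)) with (H a b + path_sum H (b :: l)).
 change (path_sum d (a :: b :: l)) with (d a b + path_sum d (b :: l)).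
 assert (H a b <= d a b) by (apply Hl; simpl; auto).
 assert (path_sum H (b :: l) <= path_sum d (b :: l)) by (apply IH; intros; apply Hl; simpl; auto). lra. Qed.

Lemma cyc_mono (H d : nat -> nat -> R) s : s <> nil -> (forall a b, In a s -> In b s -> H a b <= d a b) -> cyc_sum H s <= cyc_sum d s.
Proof. intros Hs Hl. rewrite !cyc_eq by auto. apply ps_mono. intros a b Ha Hb.
 assert (forall x, In x (s ++ hd 0%nat s :: nil) -> In x s).
 { intros x Hx. apply in_app_or in Hx. destruct Hx as [Hx|[Hx|[]]]; auto. subst. apply hd_In; auto. }
 apply Hl; auto. Qed.

Theorem corollary1 (n : nat) (adj tadj : nat -> nat -> bool)
  (H : nat -> nat -> R) (Reff : nat -> nat -> R) (cyc : R) :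
  (1 <= n)%nat ->
  simple_graph n adj ->
  connected n adj ->
  (forall u v, (u < n)%nat -> (v < n)%nat -> is_hitting_time n adj u v (H u v)) ->
  (forall u v, (u < n)%nat -> (v < n)%nat -> u <> v -> is_eff_resistance n adj u v (Reff u v)) ->
  is_CYC n H cyc ->
  spanning_tree n adj tadj ->
  cyc <= 2 * INR (n - 1) * tree_sum n tadj Reff.
Proof.
 intros Hn Hs Hc HH HR [_ Hmin] [Tsym [Tsub [Tconn _]]].
 pose proof Hs as [Asym [Airr Ab]].
 destruct (Nat.eq_dec n 1) as [E1|Hn2].
 { subst. specialize (Hmin (0%nat :: nil) (Permutation_refl _)).
   change (cyc_sum H (0%nat :: nil)) with (0 + H 0%nat 0%nat) in Hmin.
   rewrite (H_diag 1 adj 0 (H 0%nat 0%nat) (HH 0%nat 0%nat ltac:(lia) ltac:(lia))) in Hmin.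
   simpl. lra. }
 assert (Hn' : (2 <= n)%nat) by lia.
 assert (Hex : forall u v, exists phi : nat -> R, ((u < n)%nat -> (v < n)%nat -> u <> v -> is_voltage n adj u v phi /\ Reff u v = phi u)).
 { intros u v. destruct (Compare_dec.lt_dec u n), (Compare_dec.lt_dec v n), (Nat.eq_dec u v);
   try (exists (fun _ => 0); intros; try contradiction; lia).
   destruct (HR u v l l0 n0) as [phi [Hv Hr]]. exists phi; auto. }
 set (Phi := fun u v => proj1_sig (constructive_indefinite_description _ (Hex u v))).
 assert (HPhi : forall u v, (u < n)%nat -> (v < n)%nat -> u <> v -> is_voltage n adj u v (Phi u v) /\ Reff u v = Phi u v u).
 { intros u v. exact (proj2_sig (constructive_indefinite_description _ (Hex u v))). }
 assert (HV : VOLT n adj Phi) by (intros u v ? ? ?; apply HPhi; auto).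
 set (d := fun a c => Fh n adj Phi c a).
 assert (HT : forall x y, tadj x y = true -> (x < n)%nat /\ (y < n)%nat) by (intros; apply Ab; auto).
 destruct (tour_full n tadj d Hn) as [s [Hp Hcs]].
 - intros. unfold d. apply F_triangle; auto.
 - intros. unfold d. apply F_self; auto.
 - auto. - auto. - auto.
 - intros. unfold d. pose proof (F_nonneg n adj Phi Hn Hs Hc HV w u ltac:(auto) ltac:(auto)).
   pose proof (F_nonneg n adj Phi Hn Hs Hc HV u w ltac:(auto) ltac:(auto)). lra.
 - assert (Hin : forall x, In x s -> (x < n)%nat).
   { intros x Hx. apply (Permutation_in _ Hp) in Hx. apply in_seq in Hx. lia. }
   assert (Hsn : s <> nil).
   { intros E. subst. apply Permutation_length in Hp. rewrite length_seq in Hp. simpl in Hp. lia. }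
   assert (C1 : cyc_sum H s <= cyc_sum d s).
   { apply cyc_mono; auto. intros a b Ha Hb. apply Hin in Ha, Hb. unfold d.
     destruct (Nat.eq_dec a b).
     - subst. rewrite (H_diag n adj b (H b b) (HH b b Hb Hb)). rewrite F_self; auto. lra.
     - apply (lyapunov n adj a b (Fh n adj Phi b)); auto.
       + intros; apply cdeg_pos_all; auto.
       + intros; apply F_nonneg; auto.
       + apply F_self; auto.
       + intros; apply LapF; auto. }
   specialize (Hmin s Hp).
   assert (C2 : fsum n (fun u => fsum u (fun w => if tadj u w then d u w + d w u else 0))
      <= 2 * INR (n - 1) * tree_sum n tadj Reff).
   { unfold tree_sum. rewrite <- fsum_scal_l. apply fsum_le; intros u Hu.
     rewrite <- fsum_scal_l. apply fsum_le; intros w Hw.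
     destruct (tadj u w) eqn:Tuw; [|lra].
     assert (Huw : u <> w) by (intro; subst; specialize (Tsub w w Tuw); rewrite Airr in Tsub; discriminate).
     unfold d. rewrite (F_commute n adj Phi Hn Hs HV u w) by (auto; lia).
     destruct (HPhi u w ltac:(lia) ltac:(lia) Huw) as [_ Hr]. rewrite <- Hr.
     assert (0 <= Reff u w) by (rewrite Hr; apply (volt_nonneg n adj Phi u w u); auto; lia).
     pose proof (Ctot_bound n adj Hn' Hs Hc).
     apply Rmult_le_compat_r; auto. }
   lra.
Qed.
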